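(* There is an absolute constant $c>0$ such that the following holds. Let $\mathcal{J}$ be an input set for Machine Covering on $m$ machines that is proper of degree $d$, with $n$ divisible by $8$, arriving in uniformly random order, and run the procedure $A_d$ on it. Then, with probability at least $c$, every large job is scheduled onto a large machine.
   Context: Machine Covering: $n$ jobs with non-negative sizes assigned to $m$ identical parallel machines, maximizing the minimum load; $\mathrm{OPT}(\mathcal{J})$ is the optimal offline minimum load. $P_i$ is the $i$-th largest job size. A job is large if its size exceeds $\frac{\mathrm{OPT}(\mathcal{J})}{100\sqrt[4]{m}}$, small otherwise; $k$ is the number of large jobs. $\mathcal{J}$ is simple if $n<m$, or $k\ge m$, or $k\le m-\frac{m^{3/4}}{50}$; otherwise it is proper of degree $d:=\lceil\log_2(m-k)\rceil$. Procedure $A_d$ (online, knows $n$): designate $2^d$ machines as small machines and the other $m-2^d$ as large machines. Sampling phase: each of the first $n/8$ arriving jobs is assigned to a least loaded large machine; then let $P^{\uparrow}$ be the $\left(\frac{m-2^d}{8}-\frac{\sqrt m}{2}\right)$-th largest size among these $n/8$ jobs. Partition phase: set $\tau=0$; for each subsequent job of size $p$: if $p\ge P^\uparrow$, assign it to a least loaded large machine; otherwise, if $p>\tau$, set $\tau:=p$ with probability $\frac{1}{9\cdot 2^d\sqrt m}$ (independent coin); then if $p\le\tau$ assign the job to a least loaded small machine, else to a least loaded large machine. *)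

(* Defs.v *)
From HB Require Import structures.
From mathcomp Require Import all_boot all_order all_algebra all_fingroup.
From mathcomp Require Import Rstruct.
From Stdlib Require Rdefinitions.

Set Implicit Arguments.
Unset Strict Implicit.
Unset Printing Implicit Defensive.

Import Order.TTheory GRing.Theory Num.Theory.
Local Open Scope ring_scope.

Notation R := Rdefinitions.R.

Section MachineCovering.

Variables (m n : nat) (p : 'I_n -> R).

Definition load (f : {ffun 'I_n -> 'I_m}) (i : 'I_m) : R :=
  \sum_(j | f j == i) p j.

(* minimum load of the assignment f (the neutral element \sum_j p j is an
   upper bound of every load, so this is the genuine minimum when m >= 1) *)
Definition min_load (f : {ffun 'I_n -> 'I_m}) : R :=
  \big[Num.min/(\sum_j p j)]_(i < m) load f i.

(* OPT(J): maximum over all assignments of the minimum load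
   (all min loads are >= 0 for non-negative sizes) *)
Definition OPT : R := \big[Num.max/0]_(f : {ffun 'I_n -> 'I_m}) min_load f.

Definition fourth_root (x : R) : R := Num.sqrt (Num.sqrt x).

Definition is_large (j : 'I_n) : bool :=
  OPT / (100 * fourth_root m%:R) < p j.

Definition num_large : nat := #|[set j | is_large j]|.

Definition pow34 (x : R) : R := Num.sqrt x * fourth_root x.

Definition simple_input : bool :=
  [|| (n < m)%N, (m <= num_large)%N
    | num_large%:R <= m%:R - pow34 m%:R / 50].

Definition proper_input : bool := ~~ simple_input.

(* degree d = ceil(log2(m - k)) : the least e with m - k <= 2^e *)
Definition degree : nat := up_log 2 (m - num_large).

Definition small_machine (d : nat) (i : 'I_m) : bool := (i < 2 ^ d)%N.
Definition large_machine (d : nat) (i : 'I_m) : bool := (2 ^ d <= i)%N.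

(* a least loaded machine among those satisfying cls (None if there is none);
   ties are broken by the deterministic choice of [arg min] *)
Definition least_loaded (loads : {ffun 'I_m -> R}) (cls : pred 'I_m)
  : option 'I_m :=
  if [pick i | cls i] is Some i0 then
    Some [arg min_(i < i0 | cls i) loads i]%O
  else None.

Record state := State {
  st_loads : {ffun 'I_m -> R};
  st_tau : R;
  st_sched : {ffun 'I_n -> option 'I_m} }.

Definition assign (s : state) (j : 'I_n) (cls : pred 'I_m) : state :=
  match least_loaded (st_loads s) cls with
  | Some i =>
      State [ffun i' => st_loads s i' + (if i' == i then p j else 0)]
            (st_tau s)
            [ffun j' => if j' == j then Some i else st_sched s j']
  | None => s
  end.

(* rank (1-based, real valued) of the sampled threshold:
   (m - 2^d)/8 - sqrt(m)/2 ; a non-integral rank is rounded up *)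
Definition threshold_rank (d : nat) : R :=
  ((m - 2 ^ d)%N)%:R / 8 - Num.sqrt m%:R / 2.

(* P^up : the ceil(threshold_rank d)-th largest size among the first n/8
   arriving jobs; sigma t is the job arriving at time t *)
Definition P_up (d : nat) (sigma : {perm 'I_n}) : R :=
  let sample := [seq p (sigma t) | t <- [seq t <- enum 'I_n | (val t < n %/ 8)%N]] in
  nth 0 (sort (fun x y => y <= x) sample)
        `|Num.ceil (threshold_rank d) - 1|%N.

Definition coin_prob (d : nat) : R := 1 / ((9 * 2 ^ d)%N%:R * Num.sqrt m%:R).

Definition step (d : nat) (sigma : {perm 'I_n}) (coins : {ffun 'I_n -> bool})
  (s : state) (t : 'I_n) : state :=
  let j := sigma t in
  let x := p j in
  if (t < n %/ 8)%N then assign s j (large_machine d)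
  else if P_up d sigma <= x then assign s j (large_machine d)
  else
    let tau' := if (st_tau s < x) && coins t then x else st_tau s in
    let s' := State (st_loads s) tau' (st_sched s) in
    if x <= tau' then assign s' j (small_machine d)
    else assign s' j (large_machine d).

Definition init_state : state := State [ffun=> 0] 0 [ffun=> None].

Definition run_A (d : nat) (sigma : {perm 'I_n}) (coins : {ffun 'I_n -> bool})
  : state :=
  foldl (step d sigma coins) init_state (enum 'I_n).

Definition outcome := ({perm 'I_n} * {ffun 'I_n -> bool})%type.

Definition weight (d : nat) (w : outcome) : R :=
  (n`!)%:R^-1 *
  \prod_(t : 'I_n) (if w.2 t then coin_prob d else 1 - coin_prob d).

Definition Pr (d : nat) (E : pred outcome) : R :=
  \sum_(w : outcome | E w) weight d w.

Definition large_jobs_on_large_machines (d : nat) (w : outcome) : bool :=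
  [forall j : 'I_n, is_large j ==>
     match st_sched (run_A d w.1 w.2) j with
     | Some i => large_machine d i
     | None => false
     end].

End MachineCovering.

(* Main.v *)
Require Import Defs.
From HB Require Import structures.
From mathcomp Require Import all_boot all_order all_algebra all_fingroup.
From mathcomp Require Import Rstruct.
From mathcomp Require Import zify ring lra.
Import Order.TTheory GRing.Theory Num.Theory.
Local Open Scope ring_scope.

Set Implicit Arguments.
Unset Strict Implicit.
Unset Printing Implicit Defensive.


Section Det.
Variables (m n : nat) (p : 'I_n -> R).

Lemma least_loaded_some (loads : {ffun 'I_m -> R}) (cls : pred 'I_m) i :
  least_loaded loads cls = Some i -> cls i.
Proof.
rewrite /least_loaded; case: pickP => // i0 Hi0 [<-].
by case: (arg_minP loads Hi0).
Qed.

Lemma least_loaded_ex (loads : {ffun 'I_m -> R}) (cls : pred 'I_m) i :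
  cls i -> exists i', least_loaded loads cls = Some i'.
Proof.
rewrite /least_loaded; case: pickP => [i0 _ _|H]; first by eexists.
by rewrite H.
Qed.

Lemma assign_tau (s : state m n) j cls : st_tau (assign p s j cls) = st_tau s.
Proof. by rewrite /assign; case: least_loaded. Qed.

Lemma assign_other (s : state m n) j cls j' : j' != j ->
  st_sched (assign p s j cls) j' = st_sched s j'.
Proof.
move=> H; rewrite /assign; case: least_loaded => //= i.
by rewrite ffunE (negbTE H).
Qed.

Lemma assign_self (s : state m n) j (cls : pred 'I_m) i0 : cls i0 ->
  match st_sched (assign p s j cls) j with Some i => cls i | None => false end.
Proof.
move=> H; have [i' Hi'] := least_loaded_ex (st_loads s) H.
rewrite /assign Hi' /= ffunE eqxx.
exact: least_loaded_some Hi'.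
Qed.

Variables (d : nat) (sigma : {perm 'I_n}) (coins : {ffun 'I_n -> bool}).

Hypothesis hsmall : forall j j', is_large m p j -> ~~ is_large m p j' -> p j' < p j.
Hypothesis hpos : forall j, is_large m p j -> 0 < p j.
Hypothesis hcoin : forall t : 'I_n, (n %/ 8 <= t)%N -> is_large m p (sigma t) ->
   p (sigma t) < P_up m p d sigma -> coins t = false.
Variable i0 : 'I_m.
Hypothesis hi0 : large_machine d i0.

Definition Inv (s : state m n) (done : seq 'I_n) :=
  (forall j, is_large m p j -> st_tau s < p j) /\
  (forall t, t \in done -> is_large m p (sigma t) ->
     match st_sched s (sigma t) with Some i => large_machine d i | None => false end).

Lemma Inv_step s done t : Inv s done -> Inv (step p d sigma coins s t) (rcons done t).
Proof.
case=> Htau Hs.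
have Hoth : forall (s' : state m n) (cls : pred 'I_m) t', t' \in done ->
   is_large m p (sigma t') -> sigma t' != sigma t ->
   st_sched s' =1 st_sched s ->
   match st_sched (assign p s' (sigma t) cls) (sigma t') with
   | Some i => large_machine d i | None => false end.
  by move=> s' cls t' Ht' Hl Hne Heq; rewrite assign_other // Heq; exact: Hs.
rewrite /step.
set x := p (sigma t).
case: ifP => Ht.
  split; first by move=> j Hj; rewrite assign_tau; exact: Htau.
  move=> t'; rewrite mem_rcons inE => /orP[/eqP-> _|Ht' Hl].
    exact: assign_self hi0.
  case: (eqVneq (sigma t') (sigma t)) => [->|Hne]; first exact: assign_self hi0.
  exact: Hoth.
case: ifP => Hup.
  split; first by move=> j Hj; rewrite assign_tau; exact: Htau.
  move=> t'; rewrite mem_rcons inE => /orP[/eqP-> _|Ht' Hl].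
    exact: assign_self hi0.
  case: (eqVneq (sigma t') (sigma t)) => [->|Hne]; first exact: assign_self hi0.
  exact: Hoth.
have Hxup : x < P_up m p d sigma by rewrite ltNge Hup.
have Ht8 : (n %/ 8 <= t)%N by rewrite leqNgt Ht.
set tau' := if (st_tau s < x) && coins t then x else st_tau s.
have Htau' : forall j, is_large m p j -> tau' < p j.
  move=> j Hj; rewrite /tau'; case: ifP => [/andP[_ Hc]|_]; last exact: Htau.
  case: (boolP (is_large m p (sigma t))) => Hl.
    by rewrite hcoin in Hc.
  exact: hsmall.
have Hlarge : is_large m p (sigma t) -> ~~ (x <= tau').
  by move=> Hl; rewrite -ltNge; exact: Htau'.
case: ifP => Hxt.
  split; first by move=> j Hj; rewrite assign_tau; exact: Htau'.
  move=> t'; rewrite mem_rcons inE => /orP[/eqP-> Hl|Ht' Hl].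
    by move: (Hlarge Hl); rewrite Hxt.
  case: (eqVneq (sigma t') (sigma t)) => [He|Hne].
    by move: (Hlarge (etrans (congr1 _ (esym He)) Hl)); rewrite Hxt.
  exact: Hoth.
split; first by move=> j Hj; rewrite assign_tau; exact: Htau'.
move=> t'; rewrite mem_rcons inE => /orP[/eqP-> _|Ht' Hl].
  exact: assign_self hi0.
case: (eqVneq (sigma t') (sigma t)) => [->|Hne]; first exact: assign_self hi0.
exact: Hoth.
Qed.

Lemma Inv_foldl l s done : Inv s done ->
  Inv (foldl (step p d sigma coins) s l) (done ++ l).
Proof.
elim: l s done => [|t l IH] s done H /=; first by rewrite cats0.
by rewrite -cat_rcons; apply: IH; apply: Inv_step.
Qed.

Lemma run_ok : large_jobs_on_large_machines m p d (sigma, coins).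
Proof.
have [_ H] : Inv (run_A m p d sigma coins) ([::] ++ enum 'I_n).
  apply: Inv_foldl; split => //= j Hj; rewrite ffunE; exact: hpos.
apply/forallP => j; apply/implyP => Hj.
have := H ((sigma^-1)%g j); rewrite permKV mem_enum; exact.
Qed.

End Det.


Section Prob.
Variables (m n : nat) (p : 'I_n -> R) (d : nat).

Definition Bset (sigma : {perm 'I_n}) : {set 'I_n} :=
  [set t : 'I_n | [&& (n %/ 8 <= t)%N, is_large m p (sigma t) &
                      p (sigma t) < P_up m p d sigma]].

Lemma coin_sum (B : {set 'I_n}) (q : R) :
  \sum_(c : {ffun 'I_n -> bool})
     (if [forall t in B, ~~ c t] then
        \prod_(t : 'I_n) (if c t then q else 1 - q) else 0)
  = (1 - q) ^+ #|B|.
Proof.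
transitivity (\sum_(c : {ffun 'I_n -> bool}) \prod_(t : 'I_n)
    (fun t b => if (t \in B) && b then 0 else if b then q else 1 - q) t (c t)).
  apply: eq_bigr => c _; case: forallP => [H|H].
    by apply: eq_bigr => t _; case: (boolP (t \in B)) => Ht //=; rewrite (negbTE (implyP (H t) Ht)).
  have [t Ht] : exists t, (t \in B) && c t.
    case: (pickP (fun t => (t \in B) && c t)) => [t Ht|H0]; first by exists t.
    exfalso; apply: H => t; apply/implyP => Ht.
    by have := H0 t; rewrite Ht /= => ->.
  by rewrite (bigD1 t) //= Ht mul0r.
rewrite -(bigA_distr_bigA (fun t b => if (t \in B) && b then 0 else if b then q else 1 - q)).
under eq_bigr do rewrite big_bool /=.
rewrite (bigID (fun t => t \in B)) /=.
rewrite (eq_bigr (fun _ => 1 - q)); last by move=> t ->; rewrite add0r.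
rewrite prodr_const big1 ?mulr1 //.
by move=> t /negbTE ->; rewrite /= subrKC.
Qed.

End Prob.

Section Prob2.
Variables (m n : nat) (p : 'I_n -> R) (d : nat).
Hypothesis hsmall : forall j j', is_large m p j -> ~~ is_large m p j' -> p j' < p j.
Hypothesis hpos : forall j, is_large m p j -> 0 < p j.
Variable i0 : 'I_m.
Hypothesis hi0 : large_machine d i0.
Hypothesis hq : 0 <= coin_prob m d <= 1.

Lemma Pr_ge :
  (n`!)%:R^-1 * \sum_(sigma : {perm 'I_n}) (1 - coin_prob m d) ^+ #|Bset m p d sigma|
  <= Pr m d (large_jobs_on_large_machines m p d).
Proof.
case/andP: hq => hq0 hq1.
have wge0 : forall w : outcome n, 0 <= weight m d w.
  move=> w; rewrite /weight; apply: mulr_ge0; first by rewrite invr_ge0 ler0n.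
  by apply: prodr_ge0 => t _; case: (w.2 t); rewrite ?subr_ge0.
rewrite /Pr.
apply: (@le_trans _ _ (\sum_(w : outcome n)
   (if [forall t in Bset m p d w.1, ~~ w.2 t] then weight m d w else 0))).
  rewrite -(pair_bigA _ (fun (s : {perm 'I_n}) (c : {ffun 'I_n -> bool}) => if [forall t in Bset m p d s, ~~ c t]
          then weight m d (s, c) else 0)) /=.
  rewrite mulr_sumr; apply: ler_sum => s _.
  rewrite -coin_sum mulr_sumr; apply: ler_sum => c _.
  by case: ifP => _; rewrite ?mulr0 // /weight.
rewrite [X in _ <= X]big_mkcond /=.
apply: ler_sum => [[s c]] _ /=.
case: ifP => H; last by case: ifP.
rewrite (@run_ok m n p d s c hsmall hpos _ i0 hi0) //.
move=> t H1 H2 H3; apply/negbTE.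
by move/forallP: H => /(_ t) /implyP; apply; rewrite inE H1 H2 H3.
Qed.

End Prob2.



Section Count.
Variable n : nat.
Local Notation P := {perm 'I_n}.

Definition FF : R := #|{: P}|%:R.

Lemma sum_perm_mulr (f : P -> R) (tau : P) :
  \sum_(s : P) f s = \sum_(s : P) f (s * tau)%g.
Proof. exact: (reindex_inj (@mulIg _ tau)). Qed.

Lemma tperm_eqE (a b x y : 'I_n) : (tperm a b x == y) = (x == tperm a b y).
Proof. by rewrite -{1}(tpermK a b y) (inj_eq perm_inj). Qed.

Definition c1 (t u : 'I_n) : R := \sum_(s : P) (s t == u)%:R.
Definition c2 (t t' u w : 'I_n) : R := \sum_(s : P) ((s t == u) && (s t' == w))%:R.

Lemma sum_eq1 (x : 'I_n) : \sum_(u : 'I_n) ((x == u)%:R : R) = 1.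
Proof.
rewrite (bigD1 x) //= eqxx big1 ?addr0 // => u Hu.
by rewrite eq_sym (negbTE Hu).
Qed.

Lemma c1_const t u u' : c1 t u = c1 t u'.
Proof.
rewrite /c1 (sum_perm_mulr _ (tperm u u')); apply: eq_bigr => s _.
by rewrite permM tperm_eqE tpermL.
Qed.

Lemma c1_sum t : \sum_(u : 'I_n) c1 t u = FF.
Proof.
rewrite /c1 exchange_big /=.
rewrite /FF -sum1_card natr_sum; apply: eq_bigr => s _.
exact: sum_eq1.
Qed.

Lemma c1_val t u : n%:R * c1 t u = FF.
Proof.
rewrite -(c1_sum t) (eq_bigr (fun _ => c1 t u)); last by move=> u' _; exact: c1_const.
by rewrite sumr_const card_ord mulr_natl.
Qed.

Lemma c2_const t t' u w w' : w != u -> w' != u -> c2 t t' u w = c2 t t' u w'.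
Proof.
move=> Hw Hw'.
rewrite /c2 (sum_perm_mulr _ (tperm w w')); apply: eq_bigr => s _.
by rewrite !permM !tperm_eqE tpermL tpermD // eq_sym.
Qed.

Lemma c2_diag t t' u : t != t' -> c2 t t' u u = 0.
Proof.
move=> H; rewrite /c2 big1 // => s _.
case: (eqVneq (s t) u) => [E|]; last by [].
case: (eqVneq (s t') u) => [E'|]; last by [].
by move: H; rewrite -(inj_eq (@perm_inj _ s)) E E' eqxx.
Qed.

Lemma c2_sum t t' u : \sum_(w : 'I_n) c2 t t' u w = c1 t u.
Proof.
rewrite /c2 /c1 exchange_big /=; apply: eq_bigr => s _.
case: (s t == u) => /=; first exact: sum_eq1.
by rewrite big1.
Qed.

Lemma c2_val t t' u w : t != t' -> w != u -> (n.-1)%:R * c2 t t' u w = c1 t u.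
Proof.
move=> Htt Hw.
rewrite -(c2_sum t t' u) (bigD1 u) //= c2_diag // add0r.
rewrite (eq_bigr (fun _ => c2 t t' u w)); last by move=> w' Hw'; exact: c2_const.
by rewrite sumr_const cardC1 card_ord mulr_natl.
Qed.

End Count.

Section Moments.
Variables (n : nat) (T : {set 'I_n}) (a : nat).
Local Notation P := {perm 'I_n}.
Hypothesis hn : (1 < n)%N.

Definition K1 : R := FF n / n%:R.
Definition K2 : R := K1 / (n.-1)%:R.

Lemma c1K (t u : 'I_n) : c1 t u = K1.
Proof.
have := c1_val t u; rewrite /K1 => <-.
rewrite mulrC mulKf // pnatr_eq0; lia.
Qed.

Lemma c2K (t t' u w : 'I_n) : t != t' -> w != u -> c2 t t' u w = K2.
Proof.
move=> H1 H2; have := c2_val H1 H2; rewrite c1K /K2 => <-.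
rewrite mulrC mulKf // pnatr_eq0; lia.
Qed.

Definition Z (t : 'I_n) (s : P) : R := (s t \in T)%:R.
Definition X (s : P) : R := \sum_(t : 'I_n | (t < a)%N) Z t s.
Definition NN : R := #|T|%:R.
Definition AA : R := #|[pred t : 'I_n | (t < a)%N]|%:R.

Lemma memsum (x : 'I_n) : ((x \in T)%:R : R) = \sum_(u in T) (x == u)%:R.
Proof.
case: (boolP (x \in T)) => Hx.
  rewrite (bigD1 x) //= eqxx big1 ?addr0 // => u /andP[_ Hu].
  by rewrite eq_sym (negbTE Hu).
rewrite big1 // => u Hu; case: eqP => // E; by move: Hx; rewrite E Hu.
Qed.

Lemma SZ (t : 'I_n) : \sum_(s : P) Z t s = NN * K1.
Proof.
rewrite /Z; under eq_bigr do rewrite memsum.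
rewrite exchange_big /=.
rewrite (eq_bigr (fun _ => K1)); last by move=> u _; rewrite -(c1K t u).
by rewrite sumr_const /NN mulr_natl.
Qed.

Lemma sumTD (u : 'I_n) (c : R) : u \in T -> \sum_(w in T | w != u) c = (NN - 1) * c.
Proof.
move=> Hu.
have := (@bigD1 _ _ _ _ u _ (fun _ => c) Hu) => /= E.
have : \sum_(w in T) c = NN * c by rewrite sumr_const /NN mulr_natl.
rewrite E => E2. rewrite mulrBl mul1r -E2. rewrite /= addrC addrK; by [].
Qed.

Lemma SZZ (t t' : 'I_n) : t != t' -> \sum_(s : P) Z t s * Z t' s = NN * (NN - 1) * K2.
Proof.
move=> Ht.
rewrite /Z; under eq_bigr do rewrite !memsum mulr_suml.
under eq_bigr do under eq_bigr do rewrite mulr_sumr.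
under eq_bigr do under eq_bigr do under eq_bigr do rewrite -natrM mulnb.
rewrite exchange_big /=.
under eq_bigr do rewrite exchange_big /=.
transitivity (\sum_(u in T) (NN - 1) * K2).
  apply: eq_bigr => u Hu.
  rewrite (bigD1 u) //= [X in X + _](_ : _ = 0); last exact: (c2_diag u Ht).
  rewrite add0r -(sumTD K2 Hu); apply: eq_bigr => w /andP[_ Hw].
  exact: c2K.
by rewrite sumr_const /NN -mulrA mulr_natl.
Qed.

Lemma SX : \sum_(s : P) X s = AA * NN * K1.
Proof.
rewrite /X exchange_big /=.
rewrite (eq_bigr (fun _ => NN * K1)); last by move=> t _; exact: SZ.
by rewrite sumr_const /AA -mulrA mulr_natl.
Qed.

Lemma SX2 : \sum_(s : P) X s ^+ 2 = AA * (NN * K1 + (AA - 1) * (NN * (NN - 1) * K2)).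
Proof.
rewrite /X; under eq_bigr do rewrite expr2 mulr_suml.
under eq_bigr do under eq_bigr do rewrite mulr_sumr.
rewrite exchange_big /=.
under eq_bigr do rewrite exchange_big /=.
transitivity (\sum_(t : 'I_n | (t < a)%N) (NN * K1 + (AA - 1) * (NN * (NN - 1) * K2))).
  apply: eq_bigr => t Ht.
  rewrite (bigD1 t) //=.
  congr (_ + _).
    rewrite -(SZ t); apply: eq_bigr => s _; rewrite /Z.
    by case: (s t \in T); rewrite ?mulr1 ?mulr0.
  rewrite (eq_bigr (fun _ => NN * (NN - 1) * K2)); last first.
    by move=> t' /andP[_ Ht']; rewrite SZZ // eq_sym.
  have := (@bigD1 _ _ _ _ t (fun i : 'I_n => (i < a)%N) (fun _ => NN * (NN - 1) * K2) Ht) => /= E.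
  have : \sum_(i : 'I_n | (i < a)%N) NN * (NN - 1) * K2 = AA * (NN * (NN - 1) * K2).
    by rewrite sumr_const /AA mulr_natl.
  rewrite E => E2; by rewrite mulrBl mul1r -E2 /= addrC addrK.
by rewrite sumr_const /AA mulr_natl.
Qed.


Hypothesis ha : n = (8 * a)%N.

Lemma AA_val : AA = a%:R.
Proof.
rewrite /AA -sum1_card.
have -> : (\sum_(i in [pred t : 'I_n | (t < a)%N]) 1 = \sum_(i < n | (i < a)%N) 1)%N.
  by apply: eq_bigl.
rewrite -(big_ord_widen _ (fun _ => 1%N)); last lia.
by rewrite sum1_card card_ord.
Qed.

Lemma K2_ge0 : 0 <= K2.
Proof. by rewrite /K2 /K1 /FF !divr_ge0 ?ler0n. Qed.

Lemma var_bound : \sum_(s : P) (X s - NN / 8) ^+ 2 <= FF n * (NN / 8).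
Proof.
have E : forall s, (X s - NN / 8) ^+ 2 = X s ^+ 2 - (NN / 4) * X s + (NN / 8) ^+ 2.
  by move=> s; field.
under eq_bigr do rewrite E.
rewrite big_split /= sumrB -mulr_sumr SX2 SX sumr_const.
have hF : FF n = n%:R * K1.
  rewrite /K1 mulrC divfK // pnatr_eq0; lia.
have hK1 : K1 = (n.-1)%:R * K2.
  rewrite /K2 mulrC divfK // pnatr_eq0; lia.
have hn1 : (n.-1)%:R = 8 * a%:R - 1 :> R.
  by rewrite -subn1 natrB ?ha ?natrM //; lia.
have hnn : n%:R = 8 * a%:R :> R by rewrite ha natrM.
have -> : (NN / 8) ^+ 2 *+ #|{: P}| = FF n * (NN / 8) ^+ 2 by rewrite /FF mulr_natl.
rewrite hF hK1 AA_val hn1 hnn.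
have Ha : 1 <= a%:R :> R by rewrite ler1n; lia.
have HN : 0 <= NN by rewrite /NN ler0n.
have HK := K2_ge0.
set k := K2; set A := a%:R; set N := NN.
rewrite -subr_ge0.
have -> : 8 * A * ((8 * A - 1) * k) * (N / 8) -
  (A * (N * ((8 * A - 1) * k) + (A - 1) * (N * (N - 1) * k)) -
   N / 4 * (A * N * ((8 * A - 1) * k)) +
   8 * A * ((8 * A - 1) * k) * (N / 8) ^+ 2) = k * A * N * (7 / 8 * N + A - 1).
  by field.
apply: mulr_ge0; first by apply: mulr_ge0 => //; apply: mulr_ge0 => //; lra.
lra.
Qed.

Lemma cheb (r : R) : NN / 8 < r ->
  (\sum_(s : P) (nat_of_bool (r <= X s))%:R) * (r - NN / 8) ^+ 2 <= FF n * (NN / 8).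
Proof.
move=> Hr; apply: le_trans var_bound.
rewrite mulr_suml; apply: ler_sum => s _.
case: (boolP (r <= X s)) => H /=; last by rewrite mul0r sqr_ge0.
rewrite mul1r; rewrite !expr2; nra.
Qed.

End Moments.


Lemma numA (M sM f4 Er Kr Dr : R) :
  0 <= sM -> 0 <= f4 -> f4 * f4 = sM -> sM * sM = M -> 1 <= Er -> Er = M - Kr ->
  M - sM * f4 / 50 < Kr -> 1 <= Dr -> Dr < 2 * Er ->
  [/\ 27/2 <= sM, Dr < M / 25, 2 < M, 0 < (M - Dr) / 8 - sM / 2 & 27/2 <= Dr * sM].
Proof.
move=> hsM0 hf0 hf2 hsM2 hE1 hEr H3 hDr1 hDE.
have H : 50 < sM * f4 by lra.
have H' : 50 * 50 < (sM * f4) * (sM * f4) by apply: ltr_pM; lra.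
have hsM3 : 2500 < sM * sM * sM.
  have -> : sM * sM * sM = (sM * f4) * (sM * f4) by rewrite -{3}hf2; ring.
  lra.
have hsMb : 27/2 <= sM.
  rewrite leNgt; apply/negP => H4.
  have h1 : sM * sM <= 27/2 * (27/2) by apply: ler_pM; lra.
  have h2 : sM * sM * sM <= 27/2 * (27/2) * (27/2).
    apply: ler_pM => //; [exact: mulr_ge0 | lra].
  lra.
have hf4 : f4 <= sM.
  rewrite leNgt; apply/negP => H4.
  have h1 : sM * sM < f4 * f4 by apply: ltr_pM.
  have h2 : sM * 1 <= sM * sM by apply: ler_pM; lra.
  lra.
have hsf : sM * f4 <= M by rewrite -hsM2; apply: ler_pM.
have hMs : 27/2 * sM <= M by rewrite -hsM2; apply: ler_pM; lra.
have hDs : 27/2 <= Dr * sM.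
  have := ler_wpM2r hsM0 hDr1; rewrite mul1r; lra.
split; lra.
Qed.

Lemma numQ (Dr sM : R) : 27/2 <= Dr * sM ->
  [/\ 0 <= 1 / (9 * Dr * sM) <= 1, 0 <= 8 * Dr * sM &
     forall sr, sr <= 8 * Dr * sM -> 1 / (9 * Dr * sM) * sr <= 8 / 9].
Proof.
move=> hDs; have hp : 0 < 9 * Dr * sM by rewrite -mulrA; lra.
split.
- apply/andP; split; first by apply: divr_ge0; lra.
  by rewrite ler_pdivrMr; lra.
- rewrite -mulrA; lra.
- move=> sr hsr; apply: (@le_trans _ _ (1 / (9 * Dr * sM) * (8 * Dr * sM))).
    by apply: ler_wpM2l => //; apply: divr_ge0; lra.
  rewrite le_eqVlt; apply/orP; left; apply/eqP; field.
  apply/andP; split; apply/eqP => E; move: hDs; rewrite E ?mulr0 ?mul0r; lra.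
Qed.

Lemma numGap (M sM Dr Er Kr sr : R) :
  27/2 <= sM -> 1 <= Dr -> 1 <= Er -> Er = M - Kr -> sM * sM = M ->
  8 * Dr * sM < sr + 1 -> 0 <= sr ->
  (Kr - sr) / 8 < (M - Dr) / 8 - sM / 2 /\
  (Kr - sr) / 8 <= 3/5 * ((M - Dr) / 8 - sM / 2 - (Kr - sr) / 8) ^+ 2.
Proof.
move=> hsMb hDr1 hE1 hEr hM2 hs2 hsr0.
have hsM0 : 0 <= sM by lra.
have hA : sM <= Dr * sM by have := ler_wpM2r hsM0 hDr1; rewrite mul1r.
have hB' : 27/2 * Dr <= sM * Dr by apply: ler_wpM2r => //; lra.
set g := (M - Dr) / 8 - sM / 2 - (Kr - sr) / 8.
have hgap : 39/80 * sM <= g by rewrite /g; lra.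
have hsq : (39/80 * sM) * (39/80 * sM) <= g * g by apply: ler_pM => //; lra.
have hK : Kr <= M by lra.
have hM0 : 0 <= M by rewrite -hM2 mulr_ge0.
split; first lra.
rewrite expr2; lra.
Qed.

Lemma numFin (F G Bd x : R) : 0 < F -> Bd <= 3/5 * F -> G + Bd = F ->
  G / 9 <= x -> 1/25 <= F^-1 * x.
Proof.
move=> hF hBd hGB hx.
rewrite -(ler_pM2l hF) mulVKf; last by rewrite gt_eqF.
lra.
Qed.

Lemma numB (q b sr x : R) : 0 <= q -> 1 - b * q <= x -> b <= sr -> q * sr <= 8/9 ->
  1 * (1/9) <= x.
Proof.
move=> hq Hb Hc hqs.
have := ler_wpM2r hq Hc; lra.
Qed.


Lemma bernoulli (q : R) k : 0 <= q -> q <= 1 -> 1 - k%:R * q <= (1 - q) ^+ k.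
Proof.
move=> h0 h1; elim: k => [|k IH]; first by rewrite mul0r subr0 expr0.
rewrite exprS -natr1.
have H0 : 0 <= 1 - q by lra.
have Hk : 0 <= k%:R :> R by rewrite ler0n.
have := ler_wpM2l H0 IH. rewrite mulrDl mul1r. nra.
Qed.

Lemma sort_nth_le (s : seq R) (c : R) (i : nat) : 0 <= c ->
  (count (fun y : R => (c < y)%R) s <= i)%N ->
  nth 0 (sort (fun x y => y <= x) s) i <= c.
Proof.
move=> Hc Hcnt.
set srt := sort _ s.
have Hsz : size srt = size s by rewrite size_sort.
case: (leqP (size srt) i) => Hi; first by rewrite nth_default.
rewrite leNgt; apply/negP => Hlt.
have Hsorted : sorted (fun x y : R => y <= x) srt.
  by apply: sort_sorted => x y; exact: le_total.
have Hall : all (fun y : R => (c < y)%R) (take i.+1 srt).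
  apply/(all_nthP 0) => k Hk0; have Hk : (k < i.+1)%N by move: Hk0; rewrite size_take; case: ifP => // H2 H3; lia.
  rewrite nth_take //.
  have Htr : transitive (fun x y : R => y <= x).
    by move=> x y z H1 H2; exact: le_trans H2 H1.
  have Hrf : reflexive (fun x y : R => y <= x) by move=> x /=.
  have Hle := @sorted_leq_nth _ _ Htr Hrf 0 srt Hsorted k i.
  apply: (lt_le_trans Hlt); apply: Hle; rewrite ?inE; lia.
have : (count (fun y : R => (c < y)%R) (take i.+1 srt) <= count (fun y : R => (c < y)%R) srt)%N.
  by rewrite -{2}(cat_take_drop i.+1 srt) count_cat leq_addr.
move: Hall; rewrite all_count => /eqP ->.
rewrite size_takel //.
have Hp : perm_eq srt s by rewrite /srt perm_sort.
move/seq.permP: Hp => ->.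
move=> H; have := leq_trans H Hcnt; by rewrite ltnn.
Qed.

Lemma topset n (p : 'I_n -> R) (A : {set 'I_n}) N : (N <= #|A|)%N ->
  exists T : {set 'I_n}, [/\ T \subset A, #|T| = N &
    forall j j', j \in T -> j' \in A -> j' \notin T -> p j' <= p j].
Proof.
elim: N => [|N IH] HN.
  by exists set0; split; rewrite ?sub0set ?cards0 // => j j'; rewrite inE.
have [T [HTA HTc HT]] := IH (ltnW HN).
have [j0 Hj0] : exists j0, j0 \in A :\: T.
  apply/set0Pn; rewrite -card_gt0 cardsD (setIidPr HTA) HTc; lia.
set js := [arg max_(j > j0 in A :\: T) p j]%O.
have [Hjs Hmax] : js \in A :\: T /\ forall j, j \in A :\: T -> p j <= p js.
  by rewrite /js; case: (arg_maxP p Hj0) => i Hi H; split => // j /H.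
exists (js |: T); split.
- by rewrite subUset sub1set HTA andbT; move: Hjs; rewrite inE => /andP[].
- by rewrite cardsU1 HTc; move: Hjs; rewrite inE => /andP[-> _].
- move=> j j'; rewrite !inE negb_or => Hj Hj' /andP[Hj'1 Hj'2].
  case/orP: Hj => [/eqP ->|Hj].
    by apply: Hmax; rewrite inE Hj'2 Hj'.
  exact: HT.
Qed.

Lemma X_count n (T : {set 'I_n}) a (s : {perm 'I_n}) :
  X T a s = (count (fun t => s t \in T) [seq t : 'I_n <- enum 'I_n | (t < a)%N])%:R.
Proof.
rewrite count_filter -sum1_count big_enum_cond /= natr_sum /X /Z.
rewrite [RHS]big_mkcond [LHS]big_mkcond /=; apply: eq_bigr => t _.
by case: (s t \in T); case: (t < a)%N.
Qed.

Lemma Pup_le m n (p : 'I_n -> R) d (T : {set 'I_n}) (s : {perm 'I_n}) (j : 'I_n) :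
  (forall j', j' \notin T -> p j' <= p j) -> 0 <= p j ->
  0 < threshold_rank m d -> X T (n %/ 8) s < threshold_rank m d ->
  P_up m p d s <= p j.
Proof.
move=> Hdom Hj Hr HX.
rewrite /P_up; apply: sort_nth_le => //.
set r := threshold_rank m d in Hr HX *.
rewrite X_count in HX.
set cnt := count _ _ in HX.
have H1 : (count (fun y : R => (p j < y)%R)
    [seq p (s t) | t <- [seq t : 'I_n <- enum 'I_n | (t < n %/ 8)%N]] <= cnt)%N.
  rewrite count_map; apply: sub_count => t /=.
  apply: contraLR => Ht; rewrite -leNgt; exact: Hdom.
apply: (leq_trans H1).
have Hc : (cnt%:Z < Num.ceil r)%R by rewrite ceil_gt_int.
have Hc0 : (0 < Num.ceil r)%R by rewrite ceil_gt0.
have : ((`|Num.ceil r - 1|%N)%:Z = Num.ceil r - 1)%R.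
  by rewrite gez0_abs // subr_ge0.
lia.
Qed.


Lemma OPT_ge0 m n (p : 'I_n -> R) : 0 <= OPT m p.
Proof.
rewrite /OPT; elim/big_rec: _ => // i x _ Hx.
by rewrite le_max Hx orbT.
Qed.

Theorem lemma8 :
  exists c : R, 0 < c /\
  forall (m n : nat) (p : 'I_n -> R),
    (forall j, 0 <= p j) ->
    proper_input m p ->
    (8 %| n)%N ->
    c <= Pr m (degree m p) (large_jobs_on_large_machines m p (degree m p)).
Proof.
exists (1/25); split; first by rewrite divr_gt0.
move=> m n p hp hprop h8.
set K := num_large m p.
set d := degree m p.
move: hprop; rewrite /proper_input /simple_input !negb_or => /and3P[H1 H2 H3].
rewrite -leqNgt in H1; rewrite -ltnNge in H2; rewrite -ltNge in H3.
rewrite -/K in H2 H3.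
set M := m%:R in H3 *.
rewrite /pow34 /fourth_root in H3.
set sM := Num.sqrt M in H3 *.
set f4 := Num.sqrt sM in H3 *.
set E := (m - K)%N.
have hE1 : (1 <= E)%N by rewrite /E subn_gt0.
have hEr : E%:R = M - K%:R :> R.
  rewrite /E natrB; last exact: ltnW.
  by [].
have hsM0 : 0 <= sM by exact: sqrtr_ge0.
have hf0 : 0 <= f4 by exact: sqrtr_ge0.
have hM0 : 0 <= M by rewrite /M ler0n.
have hf2 : f4 * f4 = sM by rewrite -expr2 /f4 sqr_sqrtr.
have hsM2 : sM * sM = M by rewrite -expr2 /sM sqr_sqrtr.
have hE1r : 1 <= E%:R :> R by rewrite ler1n.
have hd : d = up_log 2 E by [].
have hD1 : (E <= 2 ^ d)%N by rewrite hd; exact: up_logP.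
have hD2 : (2 ^ d < 2 * E)%N.
  case: (ltngtP E 1) => HE; first by move: hE1; rewrite leqNgt HE.
    have hg := up_log_gtn (isT : (1 < 2)%N) HE.
    have hpl : (0 < up_log 2 E)%N by rewrite up_log_gt0 HE.
    by rewrite hd -(prednK hpl) expnS ltn_pmul2l.
  by rewrite hd HE up_log1.
set D := (2 ^ d)%N in hD1 hD2 *.
have hDr1 : 1 <= D%:R :> R by rewrite ler1n /D expn_gt0.
have hDE : D%:R < 2 * E%:R :> R.
  by rewrite -natrM ltr_nat.
have [hsMb hDM hM2 hr0' hDs] := numA hsM0 hf0 hf2 hsM2 hE1r hEr H3 hDr1 hDE.
have hDm : (D < m)%N.
  rewrite -(ltr_nat R); rewrite -/M; apply: (lt_le_trans hDM).
  by rewrite ler_pdivrMr // ler_peMr // ler1n.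
pose i0 : 'I_m := Ordinal hDm.
have hi0 : large_machine d i0 by rewrite /large_machine /=.
have hr : threshold_rank m d = (M - D%:R) / 8 - sM / 2.
  by rewrite /threshold_rank natrB; last exact: ltnW.
have hr0 : 0 < threshold_rank m d by rewrite hr.
have hq : coin_prob m d = 1 / (9 * D%:R * sM) by rewrite /coin_prob natrM.
have [hq01 hy0 hqsr] := numQ hDs.
rewrite -hq in hq01 hqsr.
set s := Num.truncn (8 * D%:R * sM).
have [hs1 hs2] : s%:R <= 8 * D%:R * sM /\ 8 * D%:R * sM < s.+1%:R.
  by apply/andP; apply: truncn_itv.
have hqs : coin_prob m d * s%:R <= 8 / 9 by exact: hqsr.
have hL : 0 <= OPT m p / (100 * fourth_root m%:R).
  apply: divr_ge0; first exact: OPT_ge0.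
  rewrite /fourth_root; apply: mulr_ge0; [by [] | exact: sqrtr_ge0].
have hsmall : forall j j', is_large m p j -> ~~ is_large m p j' -> p j' < p j.
  by move=> j j'; rewrite /is_large -leNgt => Hj Hj'; exact: le_lt_trans Hj' Hj.
have hpos : forall j, is_large m p j -> 0 < p j.
  by move=> j; rewrite /is_large => Hj; exact: le_lt_trans hL Hj.
have HPr := @Pr_ge m n p d hsmall hpos i0 hi0 hq01.
set Lset := [set j | is_large m p j].
have hK : #|Lset| = K by [].
set N := (K - s)%N.
have hNK : (N <= #|Lset|)%N by rewrite hK leq_subr.
have [T [HTL HTc HTd]] := topset p hNK.
have hn8 : n = (8 * (n %/ 8))%N by rewrite mulnC divnK.
have hm1 : (1 < m)%N.
  rewrite -(ltr_nat R) -/M; apply: (lt_trans _ hM2); by rewrite ltr1n.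
have hn1 : (1 < n)%N by apply: leq_trans hm1 H1.
have hB : forall sg : {perm 'I_n}, X T (n %/ 8) sg < threshold_rank m d ->
    (#|Bset m p d sg| <= s)%N.
  move=> sg HX.
  have Hsub : (fun t => sg t) @: Bset m p d sg \subset Lset :\: T.
    apply/subsetP => j /imsetP [t Ht ->].
    move: Ht; rewrite inE => /and3P[_ Hl Hlt].
    rewrite !inE Hl andbT; apply/negP => HT.
    have Hdom : forall j', j' \notin T -> p j' <= p (sg t).
      move=> j' Hj'; case: (boolP (is_large m p j')) => Hl'.
        by apply: HTd => //; rewrite inE.
      by apply: ltW; apply: hsmall.
    have := Pup_le Hdom (hp _) hr0 HX.
    by rewrite leNgt Hlt.
  have := subset_leq_card Hsub; rewrite card_imset; last exact: perm_inj.
  rewrite cardsD (setIidPr HTL) HTc hK => H; apply: (leq_trans H).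
  by rewrite leq_subLR addnC -leq_subLR leqnn.
have hF : FF n = (n`!)%:R by rewrite /FF card_Sn.
set r := threshold_rank m d in hr hr0 hB *.
have hNN : NN T = N%:R by rewrite /NN HTc.
have [hg1 hg2] : NN T / 8 < r /\ NN T / 8 <= 3/5 * (r - NN T / 8) ^+ 2.
  rewrite hNN; case: (posnP N) => HN.
    rewrite HN mul0r subr0; split => //; apply: mulr_ge0; [by rewrite divr_ge0 | exact: sqr_ge0].
  have hsK : (s < K)%N by rewrite /N subn_gt0 in HN.
  have hNr : N%:R = K%:R - s%:R :> R by rewrite /N natrB // ltnW.
  rewrite hNr hr.
  have hs2' : 8 * D%:R * sM < s%:R + 1 by rewrite natr1.
  exact: (numGap hsMb hDr1 hE1r hEr hsM2 hs2' (ler0n _ s)).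
have Hcheb := @cheb n T (n %/ 8) hn1 hn8 r hg1.
set g2 := (r - NN T / 8) ^+ 2 in hg2 Hcheb.
have hg2pos : 0 < g2 by rewrite /g2 exprn_gt0 // subr_gt0.
have hF0 : 0 <= FF n by rewrite /FF ler0n.
have hFpos : 0 < FF n by rewrite hF ltr0n fact_gt0.
set Bd := \sum_(sg : {perm 'I_n}) (nat_of_bool (r <= X T (n %/ 8) sg))%:R in Hcheb.
have hBd : Bd <= 3/5 * FF n.
  rewrite -(ler_pM2r hg2pos); apply: (le_trans Hcheb).
  by rewrite (mulrC (3/5)) -mulrA ler_pM2l.
pose G : R := \sum_(sg : {perm 'I_n}) (nat_of_bool (X T (n %/ 8) sg < r))%:R.
have hGB : G + Bd = FF n.
  rewrite /G /Bd -big_split /=.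
  rewrite (eq_bigr (fun _ => 1)); last first.
    by move=> sg _; rewrite ltNge; case: (r <= X T (n %/ 8) sg); rewrite /= ?add0r ?addr0.
  by rewrite sumr_const /FF.
have [hq0 hq1] : 0 <= coin_prob m d /\ coin_prob m d <= 1 by apply/andP.
have hsum : G / 9 <= \sum_(sg : {perm 'I_n}) (1 - coin_prob m d) ^+ #|Bset m p d sg|.
  rewrite /G mulr_suml; apply: ler_sum => sg _.
  case: (boolP (X T (n %/ 8) sg < r)) => H /=; last first.
    by rewrite mul0r exprn_ge0 // subr_ge0.
  have Hb := bernoulli #|Bset m p d sg| hq0 hq1.
  have Hc : #|Bset m p d sg|%:R <= s%:R :> R by rewrite ler_nat; exact: hB.
  by have := numB hq0 Hb Hc hqs; rewrite mul1r.
rewrite -hF in HPr; apply: le_trans HPr.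
exact: (numFin hFpos hBd hGB hsum).
Qed.
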